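(* Assume $B$ is connected. Let $\varphi\colon A\to B$ be a $\mathbb{K}$-linear map and suppose there is $N\in\mathbb{N}$ such that for every $a\in A$ the series $R_\varphi(a,z)$ is a polynomial in $z$ of degree at most $N$ (i.e. $\psi_k(a)=0$ for all $k>N$ and all $a$). Then $\varphi(1)=n\cdot 1_B$ for some integer $n$ with $0\le n\le N$; for every $a\in A$ the polynomial $R_\varphi(a,z)$ has degree at most $n$; and $R_\varphi(1,z)=(1+z)^n$, so the degree is exactly $n$ for $a=1$. Moreover, for every $a\in A$, $R_\varphi(a,z)=z^n\bigl(1+\sum_{k=1}^{n}\psi_k(z^{-1}\cdot 1+a-1)\bigr)$ as polynomials/Laurent polynomials in $z$.
   Context: $\mathbb{K}=\mathbb{R}$ or $\mathbb{C}$; $A$ and $B$ are commutative associative unital $\mathbb{K}$-algebras. For a $\mathbb{K}$-linear map $\varphi\colon A\to B$ and $a\in A$, the characteristic function is $R_\varphi(a,z)=\exp\bigl(\varphi(\ln(1+az))\bigr)\in B[[z]]$, with $\ln(1+az)=\sum_{k\ge1}(-1)^{k+1}a^kz^k/k$, $\varphi$ applied coefficientwise; write $R_\varphi(a,z)=1+\sum_{k\ge1}\psi_k(a)z^k$. Each $\psi_k(a)$ is a universal polynomial in $\varphi(a),\varphi(a^2),\dots,\varphi(a^k)$, homogeneous of degree $k$ in $a$. The algebra $B$ is called connected if for every $b\in B$ and every $k\ge0$, $b(b-1)(b-2)\cdots(b-k)=0$ implies $b=j\cdot 1_B$ for some $j\in\{0,1,\dots,k\}$ (e.g. any $B$ without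 zero divisors). *)

(* Defs.v *)
From HB Require Import structures.
From mathcomp Require Import all_boot all_order all_algebra.
Set Implicit Arguments. Unset Strict Implicit. Unset Printing Implicit Defensive.
Import Order.TTheory GRing.Theory Num.Theory.
Local Open Scope ring_scope.

Section Char.
Variables (K : numFieldType) (S : comNzRingType) (sc : K -> S).

(* Truncation (up to degree k) of the power series
   sum_{i>=1} (-1)^(i+1)/i * p i * z^i, where p i stands for phi(b^i);
   phi((-1)^(i+1)/i * b^i) = ((-1)^(i+1)/i) * phi(b^i) by K-linearity,
   scalars c of K acting on S through sc. *)
Definition lnser (p : nat -> S) (k : nat) : {poly S} :=
  \sum_(1 <= i < k.+1) (sc ((-1) ^+ i.+1 / i%:R) * p i)%:P * 'X^i.

Definition expser (f : {poly S}) (k : nat) : {poly S} :=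
  \sum_(m < k.+1) (sc (m`!%:R)^-1)%:P * f ^+ m.

Definition psiU (p : nat -> S) (k : nat) : S := (expser (lnser p k) k)`_k.
End Char.

(* psi_k(a) = coefficient of z^k in R_phi(a,z) = exp(phi(ln(1+az))). *)
Definition psi (K : numFieldType) (A B : comAlgType K) (phi : A -> B)
    (a : A) (k : nat) : B :=
  psiU (fun c : K => c%:A) (fun i => phi (a ^+ i)) k.

(* psi_k evaluated at the formal element  w*1 + c  (w = z^{-1} an indeterminate),
   phi being extended coefficientwise to A[w] -> B[w]; result in B[w]. *)
Definition psiW (K : numFieldType) (A B : comAlgType K) (phi : A -> B)
    (c : A) (k : nat) : {poly B} :=
  psiU (fun x : K => (x%:A)%:P) (fun i => map_poly phi (('X + c%:P) ^+ i)) k.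

Definition connected_alg (K : numFieldType) (B : comAlgType K) : Prop :=
  forall (b : B) (k : nat), \prod_(j < k.+1) (b - j%:R) = 0 ->
    exists j : nat, (j <= k)%N /\ b = j%:R.

(* Main.v *)
Require Import Defs.
From HB Require Import structures.
From mathcomp Require Import all_boot all_order all_algebra.
From Stdlib Require Import Lia.
Import GRing.Theory Num.Theory.
Local Open Scope ring_scope.
Set Implicit Arguments. Unset Strict Implicit.

Ltac nat_lia := intros; repeat match goal with
  | H : is_true (_ <= _)%N |- _ => move/leP: H => H
  | H : is_true (_ < _)%N |- _ => move/ltP: H => H
  | H : is_true (_ == _)%N |- _ => move/eqP: H => H
  end;
  try (apply/leP); try (apply/ltP);
  try match goal with |- is_true _ => apply/eqP end;
  unfold addn, subn, muln, addn_rec, subn_rec, muln_rec in *; lia.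

Section Gen.
Variables (K : numFieldType) (S : comNzRingType) (sc : {rmorphism K -> S}).

Lemma scV (k : nat) : sc (k.+1%:R)^-1 * k.+1%:R = 1.
Proof. rewrite -(rmorph_nat sc) -rmorphM mulVf; first exact: rmorph1. by rewrite pnatr_eq0. Qed.

Lemma natmul_inj k (x y : S) : x *+ k.+1 = y *+ k.+1 -> x = y.
Proof.
move=> h; have : sc (k.+1%:R)^-1 * (x *+ k.+1) = sc (k.+1%:R)^-1 * (y *+ k.+1) by rewrite h.
by rewrite -[x *+ _]mulr_natl -[y *+ _]mulr_natl !mulrA scV !mul1r.
Qed.

Definition zb (k : nat) (P : {poly S}) := forall i, (i < k)%N -> P`_i = 0.
Definition eqm (k : nat) (P Q : {poly S}) := forall i, (i < k)%N -> P`_i = Q`_i.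

Lemma zbM k l P Q : zb k P -> zb l Q -> zb (k + l) (P * Q).
Proof.
move=> hP hQ i hi; rewrite coefM big1 // => j _.
case: (ltnP j k) => hj; first by rewrite hP // mul0r.
rewrite hQ ?mulr0 //; have := ltn_ord j; nat_lia.
Qed.

Lemma zbX f j : zb 1 f -> zb j (f ^+ j).
Proof.
move=> h; elim: j => [|j IH]; first by move=> i.
by rewrite exprS; have := @zbM 1 j _ _ h IH; rewrite add1n.
Qed.

Lemma zbW k l P : (l <= k)%N -> zb k P -> zb l P.
Proof. by move=> hl h i hi; apply: h; apply: leq_trans hl. Qed.

Lemma eqmM k P P' Q Q' : eqm k P P' -> eqm k Q Q' -> eqm k (P * Q) (P' * Q').
Proof.
move=> hP hQ i hi; rewrite !coefM; apply: eq_bigr => j _.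
have hj := ltn_ord j.
rewrite hP ?hQ //; nat_lia.
Qed.

Lemma eqmX k P P' j : eqm k P P' -> eqm k (P ^+ j) (P' ^+ j).
Proof.
move=> h; elim: j => [|j IH]; first by move=> i.
by rewrite !exprS; apply: eqmM.
Qed.

Lemma eqm_trans k P Q R : eqm k P Q -> eqm k Q R -> eqm k P R.
Proof. by move=> h1 h2 i hi; rewrite h1 // h2. Qed.

Lemma eqmW k l P Q : (l <= k)%N -> eqm k P Q -> eqm l P Q.
Proof. by move=> hl h i hi; apply: h; apply: leq_trans hl. Qed.

Lemma sum_ord_pred1 n (F : nat -> S) (i : nat) :
  \sum_(j < n) F j * (i == (j : nat))%:R = if (i < n)%N then F i else 0.
Proof.
elim: n => [|n IH]; first by rewrite big_ord0.
rewrite big_ord_recr /= IH ltnS [(i <= n)%N]leq_eqVlt.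
case: (eqVneq i n) => [->|hne] /=; first by rewrite ltnn mulr1 add0r.
by rewrite mulr0 addr0.
Qed.

Lemma coef_lnser p m i :
  (lnser sc p m)`_i = if (0 < i <= m)%N then sc ((-1) ^+ i.+1 / i%:R) * p i else 0.
Proof.
rewrite /lnser coef_sum.
rewrite (eq_bigr (fun j => (sc ((-1) ^+ j.+1 / j%:R) * p j) * (i == j)%:R)); last first.
  by move=> j _; rewrite coefCM coefXn.
rewrite big_add1 /= big_mkord.
case: i => [|i].
  by rewrite big1 // => j _; rewrite mulr0.
rewrite (eq_bigr (fun j : 'I_m => (fun j => sc ((-1) ^+ j.+2 / j.+1%:R) * p j.+1) (j : nat) * (i == (j : nat))%:R)).
  by rewrite (sum_ord_pred1 m (fun j => sc ((-1) ^+ j.+2 / j.+1%:R) * p j.+1) i).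
by move=> j _.
Qed.

Lemma zb_lnser p m : zb 1 (lnser sc p m).
Proof. by move=> [|i] // _; rewrite coef_lnser. Qed.

Lemma eqm_lnser p m j : (j <= m)%N -> eqm j.+1 (lnser sc p m) (lnser sc p j).
Proof.
move=> hjm i hi; rewrite !coef_lnser; case: i hi => [|i] //= hi.
rewrite ltnS in hi; by rewrite hi (leq_trans hi hjm).
Qed.

Lemma eqm_expser k f g m : eqm k f g -> eqm k (expser sc f m) (expser sc g m).
Proof.
move=> h i hi; rewrite /expser !coef_sum; apply: eq_bigr => l _.
by rewrite !coefCM (@eqmX k f g l h).
Qed.

Lemma expser_trunc f j d : zb 1 f -> eqm j.+1 (expser sc f (j + d)) (expser sc f j).
Proof.
move=> hf; elim: d => [|d IH]; first by rewrite addn0.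
rewrite addnS /expser big_ord_recr /= => i hi.
rewrite coefD -IH // coefCM (@zbX f (j + d).+1 hf) ?mulr0 ?addr0 //.
by apply: leq_trans hi _; rewrite ltnS leq_addr.
Qed.

Lemma psiU_coef p j m : (j <= m)%N -> psiU sc p j = (expser sc (lnser sc p m) m)`_j.
Proof.
move=> hjm; rewrite /psiU.
have -> : m = (j + (m - j))%N by rewrite subnKC.
rewrite (@expser_trunc (lnser sc p (j + (m - j))) j (m - j) (zb_lnser p _)) //.
by rewrite (@eqm_expser j.+1 _ _ j (@eqm_lnser p (j + (m - j)) j (leq_addr (m - j) j))).
Qed.

Lemma psiU0 p : psiU sc p 0 = 1.
Proof.
rewrite /psiU /expser big_ord_recl big_ord0 addr0 expr0 mulr1 coefC /=.
by rewrite fact0 invr1 rmorph1.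
Qed.

Lemma fact_inv l : ((l.+1)`!%:R : K)^-1 * l.+1%:R = (l`!%:R)^-1.
Proof.
by rewrite factS natrM invfM mulrAC mulVf ?mul1r // pnatr_eq0.
Qed.

Section Deriv.
Variable D : {poly S} -> {poly S}.
Hypothesis Dadd : forall P Q, D (P + Q) = D P + D Q.
Hypothesis Dmul : forall P Q, D (P * Q) = D P * Q + P * D Q.
Hypothesis Dsc : forall x, D ((sc x)%:P) = 0.
Hypothesis Dzb : forall P, zb 1 P -> zb 1 (D P).

Lemma D1 : D 1 = 0.
Proof. by have := Dsc 1; rewrite rmorph1 polyC1. Qed.

Lemma DCM x P : D ((sc x)%:P * P) = (sc x)%:P * D P.
Proof. by rewrite Dmul Dsc mul0r add0r. Qed.

Lemma Dsum n (F : 'I_n -> {poly S}) : D (\sum_(l < n) F l) = \sum_(l < n) D (F l).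
Proof.
elim: n F => [|n IH] F.
  by rewrite !big_ord0; have := Dsc 0; rewrite rmorph0 polyC0.
by rewrite !big_ord_recr /= Dadd IH.
Qed.

Lemma DX f j : D (f ^+ j.+1) = D f * f ^+ j *+ j.+1.
Proof.
elim: j => [|j IH]; first by rewrite expr1 expr0 mulr1.
by rewrite exprS Dmul IH mulrnAr mulrCA -exprS -mulrS.
Qed.

Lemma D_expserS f m : D (expser sc f m.+1) = D f * expser sc f m.
Proof.
rewrite /expser big_ord_recl /= expr0 mulr1 Dadd Dsc add0r Dsum mulr_sumr.
apply: eq_bigr => l _; rewrite /bump /= DCM DX.
rewrite mulrnAr -mulrnAl mulrCA; congr (_ * _).
rewrite -polyCMn; congr (_%:P * _).
by rewrite add1n -[sc _ *+ _]mulr_natr -[l.+1%:R : S](rmorph_nat sc) -rmorphM fact_inv.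
Qed.

Lemma deriv_expser f m : zb 1 f ->
  forall i, (i <= m)%N -> (D (expser sc f m))`_i = (D f * expser sc f m)`_i.
Proof.
move=> hf; case: m => [|m] i hi.
  have hi0 : i = 0%N by apply/eqP; rewrite -leqn0.
  rewrite hi0 /expser big_ord1 expr0 mulr1 Dsc.
  rewrite coef0 (@zbM 1 0 (D f) ((sc (0`!%:R)^-1)%:P) (@Dzb f hf)) //.
rewrite D_expserS {2}/expser big_ord_recr /= mulrDr coefD.
rewrite -/(expser sc f m) mulrCA coefCM.
by rewrite (@zbM 1 m.+1 _ _ (@Dzb f hf) (@zbX f m.+1 hf)) ?mulr0 ?addr0.
Qed.

End Deriv.

Definition lsg (p : nat -> S) (i : nat) : S :=
  if i == 0%N then 0 else (-1) ^+ i.+1 * p i.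

Lemma sc_sign_nat (j : nat) : sc ((-1) ^+ j.+2 / j.+1%:R) *+ j.+1 = (-1) ^+ j.+2.
Proof.
by rewrite -mulr_natr -(rmorph_nat sc) -rmorphM divfK ?pnatr_eq0 // rmorphXn rmorphN1.
Qed.

Lemma newton p k : psiU sc p k *+ k = \sum_(i < k.+1) lsg p i * psiU sc p (k - i).
Proof.
case: k => [|k]; first by rewrite mulr0n big_ord1 /lsg /= mul0r.
pose D := fun P : {poly S} => 'X * P^`().
have Dadd : forall P Q, D (P + Q) = D P + D Q by move=> P Q; rewrite /D derivD mulrDr.
have Dmul : forall P Q, D (P * Q) = D P * Q + P * D Q.
  by move=> P Q; rewrite /D derivM mulrDr mulrA mulrCA.
have Dsc : forall x, D ((sc x)%:P) = 0 by move=> x; rewrite /D derivC mulr0.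
have Dzb : forall P, zb 1 P -> zb 1 (D P) by move=> P _ [|i] // _; rewrite /D coefXM.
have := @deriv_expser D Dadd Dmul Dsc Dzb (lnser sc p k.+1) k.+1 (zb_lnser p _) k.+1 (leqnn _).
rewrite {1}/D coefXM /= coef_deriv => ->.
rewrite coefM; apply: eq_bigr => j _.
rewrite -psiU_coef ?leq_subr //.
case: j => [[|j] hj] /=; first by rewrite /D coefXM /lsg mul0r.
rewrite /D coefXM /= coef_deriv coef_lnser /= -ltnS hj /lsg /=.
by rewrite -mulrnAl sc_sign_nat.
Qed.

End Gen.

Lemma psiU_ext (K : numFieldType) (S : comNzRingType) (sc1 sc2 : K -> S)
  (p1 p2 : nat -> S) k :
  (forall x, sc1 x = sc2 x) -> (forall i, (0 < i)%N -> p1 i = p2 i) ->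
  psiU sc1 p1 k = psiU sc2 p2 k.
Proof.
move=> h1 h2; rewrite /psiU.
have -> : lnser sc1 p1 k = lnser sc2 p2 k.
  by apply: eq_big_nat => i /andP [hi _]; rewrite h1 h2.
suff -> : expser sc1 (lnser sc2 p2 k) k = expser sc2 (lnser sc2 p2 k) k by [].
by rewrite /expser; apply: eq_bigr => l _; rewrite h1.
Qed.

Lemma psiU_mor (K : numFieldType) (S S2 : comNzRingType) (sc : {rmorphism K -> S})
  (f : {rmorphism S -> S2}) p k :
  psiU (f \o sc) (f \o p) k = f (psiU sc p k).
Proof.
rewrite /psiU -coef_map.
have E1 : map_poly f (lnser sc p k) = lnser (f \o sc) (f \o p) k.
  rewrite /lnser rmorph_sum; apply: eq_bigr => i _.
  rewrite rmorphM /= map_polyC map_polyXn; congr (_%:P * _); exact: rmorphM.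
have E2 : forall F, map_poly f (expser sc F k) = expser (f \o sc) (map_poly f F) k.
  move=> F; rewrite /expser rmorph_sum; apply: eq_bigr => l _.
  by rewrite rmorphM /= map_polyC rmorphXn.
by rewrite E2 E1.
Qed.

Section Gbin.
Variables (K : numFieldType) (S : comNzRingType) (sc : {rmorphism K -> S}).

Definition gbin (x : S) (s : nat) : S := sc (s`!%:R)^-1 * \prod_(i < s) (x - i%:R).

Lemma gbin0 x : gbin x 0 = 1.
Proof. by rewrite /gbin big_ord0 mulr1 fact0 invr1 rmorph1. Qed.

Lemma sc_fact_inv s : sc ((s.+1)`!%:R)^-1 *+ s.+1 = sc (s`!%:R)^-1.
Proof.
by rewrite -mulr_natr -(rmorph_nat sc) -rmorphM fact_inv.
Qed.

Lemma gbinS x s : gbin x s.+1 *+ s.+1 = gbin x s * (x - s%:R).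
Proof.
by rewrite /gbin big_ord_recr /= -mulrnAl sc_fact_inv mulrA.
Qed.

Lemma gbin_pascal x s : gbin (x + 1) s.+1 = gbin x s.+1 + gbin x s.
Proof.
rewrite /gbin big_ord_recl big_ord_recr /= subr0.
set G := \prod_(i < s) (x - i%:R).
have -> : \prod_(i < s) (x + 1 - (bump 0 i)%:R) = G.
  by apply: eq_bigr => i _; rewrite /bump /= add1n -natr1 opprD addrACA subrr addr0.
rewrite -(sc_fact_inv s).
set c := sc _.
rewrite mulrnAl -mulrnAr -mulrDr; congr (_ * _).
rewrite -[G *+ _]mulr_natr -mulrDr mulrC; congr (_ * _).
by rewrite -natr1 addrA subrK.
Qed.

Lemma prod_natB n s : \prod_(i < s) (n%:R - i%:R : S) = (n ^_ s)%:R.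
Proof.
elim: s => [|s IH]; first by rewrite big_ord0 ffactn0.
rewrite big_ord_recr /= IH ffactnSr natrM.
case: (leqP s n) => hs; first by rewrite natrB.
by rewrite ffact_small // !mul0r.
Qed.

Lemma gbin_nat n s : gbin n%:R s = ('C(n, s))%:R.
Proof.
rewrite /gbin prod_natB -bin_ffact natrM mulrCA.
rewrite -[(s`!)%:R : S](rmorph_nat sc) -rmorphM mulVf ?rmorph1 ?mulr1 //.
by rewrite pnatr_eq0 -lt0n fact_gt0.
Qed.

Lemma gbin_vander r s x : (r <= s)%N ->
  \sum_(j < r.+1) ('C(r, j))%:R * gbin x (s - j) = gbin (x + r%:R) s.
Proof.
elim: r s => [|r IH] s hrs.
  by rewrite big_ord1 bin0 subn0 addr0 mul1r.
case: s hrs => [|s] // hrs.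
rewrite big_ord_recl /= bin0 mul1r subn0.
rewrite (eq_bigr (fun j : 'I_r.+1 => ('C(r, j.+1))%:R * gbin x (s - j) + ('C(r, j))%:R * gbin x (s - j))); last first.
  by move=> j _; rewrite /bump /= add1n binS natrD mulrDl subSS.
rewrite big_split /= IH // addrA.
have -> : gbin x s.+1 + \sum_(i < r.+1) ('C(r, i.+1))%:R * gbin x (s - i) = gbin (x + r%:R) s.+1.
  rewrite -(IH s.+1) ?(ltnW hrs) //.
  rewrite [in LHS]big_ord_recr /= bin_small // mul0r addr0.
  rewrite big_ord_recl /= bin0 mul1r subn0.
  by congr (_ + _); apply: eq_bigr => j _; rewrite /bump /= add1n subSS.
by rewrite -natr1 addrA gbin_pascal.
Qed.

End Gbin.

Lemma deriv_sumo (S : nzRingType) n (F : 'I_n -> {poly S}) :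
  (\sum_(i < n) F i)^`() = \sum_(i < n) (F i)^`().
Proof.
elim: n F => [|n IH] F; first by rewrite !big_ord0 deriv0.
by rewrite !big_ord_recr derivD IH.
Qed.

Lemma deriv_CXn (S : nzRingType) (c : S) e :
  (c%:P * 'X^(e.+1))^`() = (c *+ e.+1)%:P * 'X^e.
Proof. by rewrite deriv_mulC derivXn /= mulrnAr -mulrnAl -polyCMn. Qed.

Section USL.
Variables (K : numFieldType) (S : comNzRingType) (sc : {rmorphism K -> S}).
Variables (b : S) (p : nat -> S).

Definition pp (j : nat) : S := if j == 0%N then b else p j.

Definition qT (i : nat) : {poly S} :=
  \sum_(j < i.+1) ((('C(i, j))%:R * pp j)%:P * 'X^(i - j)).

Lemma qT_deriv i : (qT i.+1)^`() = qT i *+ i.+1.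
Proof.
rewrite /qT deriv_sumo big_ord_recr /= subnn deriv_mulC derivXn mulr0n mulr0 addr0.
rewrite -sumrMnl; apply: eq_bigr => j _.
have hj : (j <= i)%N by rewrite -ltnS.
rewrite /= subSn // deriv_CXn -[RHS]mulrnAl -polyCMn; congr (_%:P * _).
rewrite -!mulrnAl; congr (_ * _).
rewrite -!mulrnA; congr (_%:R).
have := mul_bin_down i.+1 j; rewrite /= subSn // => h.
by rewrite mulnC -h mulnC.
Qed.

Definition scT : {rmorphism K -> {poly S}} := polyC \o sc.

Definition D2 (P : {poly {poly S}}) : {poly {poly S}} :=
  map_poly (fun x : {poly S} => x^`()) P.

Lemma D2add P Q : D2 (P + Q) = D2 P + D2 Q.
Proof. by apply/polyP => i; rewrite coefD !coef_map_id0 ?deriv0 // coefD derivD. Qed.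

Lemma D2mul P Q : D2 (P * Q) = D2 P * Q + P * D2 Q.
Proof.
apply/polyP => i; rewrite coef_map_id0 ?deriv0 // coefM deriv_sumo coefD !coefM -big_split.
by apply: eq_bigr => j _; rewrite derivM !coef_map_id0 ?deriv0.
Qed.

Lemma D2sc x : D2 ((scT x)%:P) = 0.
Proof.
apply/polyP => i; rewrite coef_map_id0 ?deriv0 // coefC coef0.
by case: (i == 0%N); rewrite ?deriv0 // /scT /= derivC.
Qed.

Lemma D2zb P : zb 1 P -> zb 1 (D2 P).
Proof. by move=> h [|i] // _; rewrite /D2 coef_map_id0 ?deriv0 // (h 0%N) // deriv0. Qed.

Lemma qT0 : qT 0 = b%:P.
Proof. by rewrite /qT big_ord1 /= bin0 mul1r expr0 mulr1. Qed.

Lemma qT_ode m : (psiU scT qT m.+1)^`() = psiU scT qT m * (b%:P - m%:R).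
Proof.
set f := lnser scT qT m.+1.
have H := @deriv_expser K {poly S} scT D2 D2add D2mul D2sc D2zb f m.+1 (zb_lnser scT qT _) m.+1 (leqnn _).
have -> : (psiU scT qT m.+1)^`() = (D2 f * expser scT f m.+1)`_m.+1.
  by rewrite -H /D2 coef_map_id0 ?deriv0.
rewrite coefM big_ord_recl /= coef_map_id0 ?deriv0 // coef_lnser /= deriv0 mul0r add0r.
rewrite big_ord_recl.
have HN : psiU scT qT m *+ m = \sum_(i < m) (-1) ^+ i.+2 * qT i.+1 * psiU scT qT (m - i.+1)%N.
  rewrite newton big_ord_recl /lsg /= mul0r add0r.
  by apply: eq_bigr => i _; rewrite /bump /= add1n.
rewrite (eq_bigr (fun j : 'I_m => - ((-1) ^+ j.+2 * qT j.+1 * psiU scT qT (m - j.+1)%N))); last first.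
  move=> j _; rewrite /bump /= !add1n.
  have hj := ltn_ord j.
  rewrite coef_map_id0 ?deriv0 // coef_lnser /= ltnS hj.
  rewrite -psiU_coef ?leq_subr // subSS.
  have Hb : bump 0 j = j.+1 by rewrite /bump add1n.
  rewrite Hb /scT /= deriv_mulC qT_deriv mulrnAr -mulrnAl -polyCMn sc_sign_nat.
  by rewrite polyC_exp polyCN polyC1 exprS mulN1r mulNr mulNr.
rewrite sumrN -HN.
rewrite coef_map_id0 ?deriv0 // coef_lnser /= -psiU_coef ?leqnSn // subn1 /=.
rewrite /scT /= deriv_mulC qT_deriv qT0.
have -> : bump 0 0 = 1%N by [].
rewrite mulr1n invr1 mulr1 expr2 mulN1r opprK rmorph1 polyC1 mul1r mulr1n.
by rewrite mulrBr mulrC mulr_natr.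
exact: leqnSn.
Qed.

Definition rT (m : nat) : {poly S} :=
  \sum_(k < m.+1) (psiU sc p k * gbin sc (b - k%:R) (m - k))%:P * 'X^(m - k).

Lemma rT_deriv m : (rT m.+1)^`() = rT m * (b%:P - m%:R).
Proof.
rewrite /rT deriv_sumo big_ord_recr /= subnn deriv_mulC derivXn mulr0n mulr0 addr0 mulr_suml.
apply: eq_bigr => k _.
have hk : (k <= m)%N by rewrite -ltnS.
rewrite /= subSn // deriv_CXn -mulrnAr gbinS (natrB _ hk) opprB addrA subrK.
by rewrite [RHS]mulrAC -[(m%:R : {poly S})]polyC_natr -polyCB -polyCM mulrA.
Qed.

Lemma poly_eq_deriv (P Q : {poly S}) : P^`() = Q^`() -> P`_0 = Q`_0 -> P = Q.
Proof.
move=> hd h0; apply/polyP => [[|i]] //.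
have := congr1 (fun R : {poly S} => R`_i) hd; rewrite !coef_deriv.
exact: (natmul_inj sc).
Qed.

Lemma eval_psiU (t : S) m :
  (psiU scT qT m).[t] = psiU sc (fun i => (qT i).[t]) m.
Proof.
transitivity (horner_eval t (psiU scT qT m)); first by [].
rewrite -psiU_mor.
by apply: psiU_ext => [x|i _] //=; rewrite horner_evalE // /scT /= hornerC.
Qed.

Lemma qT_at0 i : (0 < i)%N -> (qT i).[0] = p i.
Proof.
case: i => // i _.
rewrite /qT horner_sum big_ord_recr /= subnn expr0 mulr1 hornerC binn mul1r /pp /=.
rewrite big1 ?add0r // => j _.
rewrite hornerCM hornerXn expr0n subn_eq0 leqNgt.
have -> : (j < i.+1)%N by apply: (leq_trans (ltn_ord j)).
by rewrite /= ?mulr0n ?mulr0.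
Qed.

Lemma psiU_q_rT m : psiU scT qT m = rT m.
Proof.
elim: m => [|m IH].
  by rewrite psiU0 /rT big_ord1 psiU0 gbin0 subnn mulr1 expr0 mulr1 polyC1.
apply: poly_eq_deriv; first by rewrite qT_ode IH rT_deriv.
rewrite -horner_coef0 eval_psiU.
rewrite (@psiU_ext _ _ sc sc (fun i => (qT i).[0]) p) //; last by move=> i hi; rewrite qT_at0.
rewrite /rT coef_sum big_ord_recr /= subnn expr0 mulr1 coefC /= gbin0 mulr1.
rewrite big1 ?add0r // => k _.
rewrite coefCM coefXn eq_sym subn_eq0 leqNgt ltn_ord.
by rewrite /= ?mulr0n ?mulr0.
Qed.

Lemma USL (t : S) m :
  psiU sc (fun i => \sum_(j < i.+1) ('C(i, j))%:R * t ^+ (i - j) * pp j) m =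
  \sum_(k < m.+1) psiU sc p k * gbin sc (b - k%:R) (m - k) * t ^+ (m - k).
Proof.
transitivity (psiU sc (fun i => (qT i).[t]) m).
  apply: psiU_ext => // i _; rewrite /qT horner_sum; apply: eq_bigr => j _.
  by rewrite hornerCM hornerXn mulrAC.
rewrite -eval_psiU psiU_q_rT /rT horner_sum; apply: eq_bigr => k _.
by rewrite hornerCM hornerXn.
Qed.

End USL.

Lemma sum_trunc (R : zmodType) M L (F : nat -> R) : (M <= L)%N ->
  (forall k, (M < k)%N -> F k = 0) ->
  \sum_(k < L.+1) F k = \sum_(k < M.+1) F k.
Proof.
move=> hML hF.
rewrite -!(big_mkord xpredT) (@big_cat_nat _ _ _ M.+1) ?ltnS //=.
rewrite [X in _ + X]big1_seq ?addr0 // => k /andP [_].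
by rewrite mem_index_iota => /andP [hk _]; apply: hF.
Qed.

Lemma sum_rev_pred1 (R : comNzRingType) m j (F : nat -> R) :
  \sum_(k < m.+1) F k * (j == (m - k)%N)%:R = if (j <= m)%N then F (m - j)%N else 0.
Proof.
rewrite (reindex_inj rev_ord_inj) /=.
rewrite (eq_bigr (fun i : 'I_m.+1 => F (m - i)%N * (j == (i : nat))%:R)).
  by rewrite (sum_ord_pred1 m.+1 (fun i => F (m - i)%N) j) ltnS.
move=> i _; rewrite subSS subKn //; by rewrite -ltnS.
Qed.

Lemma gbin_mor (K : numFieldType) (S S2 : comNzRingType) (sc : {rmorphism K -> S})
  (f : {rmorphism S -> S2}) x s : gbin (f \o sc) (f x) s = f (gbin sc x s).
Proof.
rewrite /gbin rmorphM rmorph_prod /=; congr (_ * _); apply: eq_bigr => i _.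
by rewrite rmorphB rmorph_nat.
Qed.

Section Main.
Variables (K : numFieldType) (A B : comAlgType K) (phi : {linear A -> B}).

Local Notation sc := (in_alg B).

Lemma psi_def a k : psi phi a k = psiU sc (fun i => phi (a ^+ i)) k.
Proof. exact: psiU_ext. Qed.

Lemma psi_shift a m :
  psi phi (a + 1) m = \sum_(k < m.+1) psi phi a k * gbin sc (phi 1 - k%:R) (m - k).
Proof.
rewrite psi_def.
rewrite (@psiU_ext _ _ sc sc _ (fun i => \sum_(j < i.+1) ('C(i, j))%:R * 1 ^+ (i - j) * pp (phi 1) (fun i => phi (a ^+ i)) j)) //; last first.
  move=> i _; rewrite exprD1n raddf_sum; apply: eq_bigr => j _.
  rewrite raddfMn expr1n mulr1 mulr_natl /pp.
  by case: eqP => // ->; rewrite expr0.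
rewrite USL; apply: eq_bigr => k _; by rewrite expr1n mulr1 psi_def.
Qed.

Lemma psi_zero k : (0 < k)%N -> psi phi 0 k = 0.
Proof.
case: k => // k _; rewrite psi_def.
apply: (@natmul_inj _ _ sc k); rewrite mul0rn newton big1 // => i _.
rewrite /lsg; case: eqP => [_|/eqP hi]; first by rewrite mul0r.
by rewrite expr0n (negbTE hi) /= mulr0n raddf0 mulr0 mul0r.
Qed.

Lemma psi_one m : psi phi 1 m = gbin sc (phi 1) m.
Proof.
transitivity (psi phi (0 + 1) m); first by rewrite add0r.
rewrite psi_shift big_ord_recl /= psi_def psiU0 subr0 mul1r subn0.
rewrite big1 ?addr0 // => k _.
by rewrite psi_zero ?mul0r.
Qed.

Lemma deg_step n M (h1 : phi 1 = n%:R) (hnM : (n < M)%N)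
  (hM : forall a k, (M < k)%N -> psi phi a k = 0) a : psi phi a M = 0.
Proof.
set r := (M - n)%N.
have hr : (0 < r)%N by rewrite subn_gt0.
set c := a - 1.
have Hc : forall k, (M < k)%N -> psi phi c k = 0 by move=> k; apply: hM.
have E1 : psi phi a M = \sum_(j < r.+1) ('C(r, j))%:R * psi phi (c + 1) (M + r - j)%N.
  rewrite /c subrK big_ord_recr /= binn mul1r addnK.
  rewrite big1 ?add0r // => j _.
  rewrite hM ?mulr0 //.
  have hj := ltn_ord j; nat_lia.
rewrite E1 (eq_bigr (fun j : 'I_r.+1 => \sum_(k < M.+1) ('C(r,j))%:R * (psi phi c k * gbin sc (phi 1 - k%:R) (M + r - j - k)%N))); last first.
  move=> j _; rewrite psi_shift (@sum_trunc _ M (M + r - j)%N (fun k => psi phi c k * gbin sc (phi 1 - k%:R) (M + r - j - k)%N)) ?mulr_sumr //.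
    have hj := ltn_ord j; nat_lia.
  by move=> k hk; rewrite Hc ?mul0r.
rewrite exchange_big /= big1 // => k _.
have hk : (k <= M)%N by rewrite -ltnS.
rewrite (eq_bigr (fun j : 'I_r.+1 => psi phi c k * (('C(r,j))%:R * gbin sc (phi 1 - k%:R) ((M + r - k) - j)%N))); last first.
  by move=> j _; rewrite mulrCA subnAC.
rewrite -mulr_sumr gbin_vander; last by nat_lia.
have -> : phi 1 - k%:R + r%:R = ((M - k)%N%:R : B).
  by rewrite h1 /r (natrB _ (ltnW hnM)) (natrB _ hk) addrC addrA subrK.
by rewrite gbin_nat bin_small ?mulr0 //; nat_lia.
Qed.

Lemma deg_all n N (h1 : phi 1 = n%:R) (hnN : (n <= N)%N)
  (hN : forall a k, (N < k)%N -> psi phi a k = 0) :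
  forall a k, (n < k)%N -> psi phi a k = 0.
Proof.
have P : forall e, (e <= N - n)%N -> forall a k, (N - e < k)%N -> psi phi a k = 0.
  elim=> [|e IH] he a k hk; first by rewrite subn0 in hk; apply: hN.
  case: (leqP k (N - e)) => hke.
    have -> : k = (N - e)%N by nat_lia.
    apply: (deg_step h1); first by nat_lia.
    by apply: IH; apply: ltnW.
  by apply: (IH (ltnW he)).
move=> a k hk; apply: (P (N - n)%N) => //; by rewrite subKn.
Qed.

Lemma map_poly_CXn (d : A) e : map_poly phi (d%:P * 'X^e) = (phi d)%:P * 'X^e.
Proof.
apply/polyP => l; rewrite coef_map_id0 ?raddf0 // !coefCM !coefXn.
by case: (l == e); rewrite /= ?mulr1n ?mulr0n ?mulr1 ?mulr0 ?raddf0.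
Qed.

Lemma psiW_formula c m : psiW phi c m =
  \sum_(k < m.+1) (psi phi c k * gbin sc (phi 1 - k%:R) (m - k))%:P * 'X^(m - k).
Proof.
rewrite /psiW.
pose scP : {rmorphism K -> {poly B}} := polyC \o sc.
transitivity (psiU scP (fun i => \sum_(j < i.+1) ('C(i, j))%:R * 'X ^+ (i - j) *
    pp ((phi 1)%:P) (fun i => (phi (c ^+ i))%:P) j) m).
  apply: psiU_ext => // i _.
  rewrite exprDn raddf_sum; apply: eq_bigr => j _.
  rewrite raddfMn /= -polyC_exp mulrC map_poly_CXn /pp.
  have -> : (if (j : nat) == 0%N then (phi 1)%:P else (phi (c ^+ j))%:P) = (phi (c ^+ j))%:P.
    by case: eqP => // ->; rewrite expr0.
  by rewrite -mulrA mulr_natl [_ * 'X^_]mulrC.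
rewrite USL; apply: eq_bigr => k _.
have E : psiU scP (fun i => (phi (c ^+ i))%:P) k = (psi phi c k)%:P.
  by rewrite psi_def -psiU_mor; apply: psiU_ext.
rewrite E -[(k%:R : {poly B})]polyC_natr -polyCB.
have -> : gbin scP (phi 1 - k%:R)%:P (m - k) = (gbin sc (phi 1 - k%:R) (m - k))%:P.
  exact: gbin_mor.
by rewrite -polyCM.
Qed.

Lemma final_coef n (h1 : phi 1 = n%:R)
  (hdeg : forall a k, (n < k)%N -> psi phi a k = 0) a j :
  (1 + \sum_(1 <= k < n.+1) psiW phi (a - 1) k)`_j =
  if (j <= n)%N then psi phi a (n - j) else 0.
Proof.
set c := a - 1.
have SA : forall m, psiW phi c m =
    \sum_(k < m.+1) ((psi phi c k) *+ 'C(n - k, m - k))%:P * 'X^(m - k).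
  move=> m; rewrite psiW_formula; apply: eq_bigr => k _.
  case: (leqP k n) => hk.
    by rewrite h1 -(natrB _ hk) gbin_nat mulr_natr.
  by rewrite hdeg // mul0r mul0rn.
have EQ : 1 + \sum_(1 <= k < n.+1) psiW phi c k = \sum_(m < n.+1) psiW phi c m.
  rewrite -(big_mkord xpredT) big_ltn //; congr (_ + _).
  by rewrite /psiW (@psiU_ext _ _ _ (polyC \o in_alg B) _ (fun i => map_poly phi (('X + c%:P) ^+ i))) // psiU0.
rewrite EQ coef_sum.
rewrite (eq_bigr (fun m : 'I_n.+1 => if (j <= m)%N then psi phi c (m - j) *+ 'C(n - (m - j), m - (m - j)) else 0)); last first.
  move=> m _; rewrite SA coef_sum.
  rewrite (eq_bigr (fun k : 'I_m.+1 => (fun k => psi phi c k *+ 'C(n - k, m - k)) (k : nat) * (j == (m - k)%N)%:R)); last first.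
    by move=> k _; rewrite coefCM coefXn.
  by rewrite (sum_rev_pred1 (m : nat) j (fun k => psi phi c k *+ 'C(n - k, m - k))).
case: (leqP j n) => hjn; last first.
  rewrite big1 // => m _.
  have hm := ltn_ord m.
  have -> : (j <= m)%N = false by apply/negbTE; rewrite -ltnNge; apply: (leq_trans hm).
  done.
have -> : a = c + 1 by rewrite /c subrK.
rewrite psi_shift.
rewrite -[LHS](big_mkord xpredT (fun i => if (j <= i)%N then psi phi c (i - j) *+ 'C(n - (i - j), i - (i - j)) else 0)) (@big_cat_nat _ _ _ j) //=; last exact: leqW.
rewrite big1_seq ?add0r; last first.
  move=> m /andP [_]; rewrite mem_index_iota => /andP [_ hm].
  by have -> : (j <= m)%N = false by apply/negbTE; rewrite -ltnNge.
rewrite -{1}[j]add0n big_addn subSn // big_mkord.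
apply: eq_bigr => k _.
have hk : (k <= n - j)%N by rewrite -ltnS; apply: ltn_ord.
rewrite leq_addl addnK /= h1 -(natrB _ (leq_trans hk (leq_subr j n))) gbin_nat mulr_natr.
congr (_ *+ _).
rewrite addKn subnAC bin_sub //.
by nat_lia.
Qed.

End Main.

Unset Implicit Arguments.

Theorem mainTheorem2 (K : numFieldType) (A B : comAlgType K)
    (phi : {linear A -> B}) (N : nat) :
  connected_alg B ->
  (forall (a : A) (k : nat), (N < k)%N -> psi phi a k = 0) ->
  exists n : nat,
    [/\ (n <= N)%N,
        phi 1 = n%:R,
        (forall (a : A) (k : nat), (n < k)%N -> psi phi a k = 0),
        (forall k : nat, psi phi 1 k = ('C(n, k))%:R) &
        (forall a : A,
           let Q := 1 + \sum_(1 <= k < n.+1) psiW phi (a - 1) k in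
           forall j : nat, Q`_j = (if (j <= n)%N then psi phi a (n - j) else 0))].
Proof.
move=> hconn hN.
have hb : gbin (in_alg B) (phi 1) N.+1 = 0 by rewrite -psi_one; apply: hN.
have hprod : \prod_(j < N.+1) (phi 1 - j%:R) = 0.
  move: hb; rewrite /gbin => hb.
  have : (in_alg B) (N.+1`!%:R) * ((in_alg B) (N.+1`!%:R)^-1 *
    \prod_(i < N.+1) (phi 1 - i%:R)) = 0 by rewrite hb mulr0.
  rewrite mulrA -rmorphM divff ?rmorph1 ?mul1r //.
  by rewrite pnatr_eq0 -lt0n fact_gt0.
have [n [hnN h1]] := hconn (phi 1) N hprod.
have hdeg := deg_all h1 hnN hN.
exists n; split => //.
  by move=> k; rewrite psi_one h1 gbin_nat.
move=> a Q j; exact: final_coef.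
Qed.
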